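(* Let $\mathbb{F}$ be any field. There exists a family $\{P_d\}$ of polynomials in $\mathsf{VNP}$, where $P_d$ has degree $d$ and is in $n = \mathrm{poly}(d)$ variables, such that any $\Sigma\Pi\Sigma$ circuit over $\mathbb{F}$ of formal degree $d$ which is functionally equivalent to $P_d$ over $\{0,1\}^n$ has size at least $\exp(\Omega(d\log n))$.
   Context: A $\Sigma\Pi\Sigma$ (depth-3) circuit over $\mathbb{F}$ computes an expression $\sum_{i=1}^{s}\prod_{j=1}^{d_i} L_{i,j}(\mathbf{x})$ where each $L_{i,j}$ is an affine form in the variables $x_1,\dots,x_n$; its formal degree is $\max_i d_i$, and its size is at least its top fan-in $s$. A circuit $C$ is functionally equivalent to a polynomial $P\in\mathbb{F}[x_1,\dots,x_n]$ over $\{0,1\}^n$ if $C(\mathbf{x})=P(\mathbf{x})$ for every $\mathbf{x}\in\{0,1\}^n$ (as opposed to $C\equiv P$ as formal polynomials). $\mathsf{VNP}$ denotes Valiant's class of families of polynomials that are explicit in the algebraic sense (families of the form $P_n(\mathbf{x})=\sum_{\mathbf{b}\in\{0,1\}^{m}} g_n(\mathbf{x},\mathbf{b})$ with $m=\mathrm{poly}(n)$ and $\{g_n\}$ computable by polynomial-size arithmetic circuits of polynomial degree). *)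

(* Defs.v *)
From HB Require Import structures.
From mathcomp Require Import all_boot all_order all_algebra.
From mathcomp Require Import mpoly.
Set Implicit Arguments. Unset Strict Implicit. Unset Printing Implicit Defensive.
Import Order.TTheory GRing.Theory.
Local Open Scope ring_scope.

(* Degree of a multivariate polynomial: total degree; deg 0 := 0.     *)
Definition mdegree (F : fieldType) (n : nat) (p : {mpoly F[n]}) : nat :=
  (msize p).-1.

Definition poly_bounded (f : nat -> nat) : Prop :=
  exists c : nat, forall d : nat, (f d <= c * d ^ c + c)%N.

(* General arithmetic circuits, as straight-line programs.  Gate k may
   refer to gates j < k; a reference to a not-yet-computed gate reads 0
   (harmless: it is the constant-0 gate). *)
Inductive gate (F : Type) (n : nat) : Type :=
| GVar of 'I_n
| GConst of F
| GAdd of nat & nat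
| GMul of nat & nat.

Definition gate_val (F : fieldType) (n : nat) (vals : seq {mpoly F[n]})
    (g : gate F n) : {mpoly F[n]} :=
  match g with
  | GVar i => 'X_i
  | GConst c => c%:MP
  | GAdd j k => nth 0 vals j + nth 0 vals k
  | GMul j k => nth 0 vals j * nth 0 vals k
  end.

Definition circuit_vals (F : fieldType) (n : nat) (C : seq (gate F n))
    : seq {mpoly F[n]} :=
  foldl (fun vals g => rcons vals (gate_val vals g)) [::] C.

Definition circuit_poly (F : fieldType) (n : nat) (C : seq (gate F n))
    : {mpoly F[n]} :=
  last 0 (circuit_vals C).

Definition circuit_size (F : Type) (n : nat) (C : seq (gate F n)) : nat :=
  size C.

(* Valiant's VNP, for a family indexed by d, with nv d variables:
   P_d(x) = sum_{b in {0,1}^(m d)} g_d(x, b), where m is polynomially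
   bounded and g_d (in nv d + m d variables) is computed by an arithmetic
   circuit of size poly(d) and has degree poly(d). *)
Definition bool_subst (F : fieldType) (n m : nat) (b : 'I_m -> bool)
    : (n + m).-tuple {mpoly F[n]} :=
  [tuple match split i with
         | inl j => 'X_j
         | inr j => ((b j)%:R : F)%:MP
         end | i < n + m].

Definition VNP_family (F : fieldType) (nv : nat -> nat)
    (P : forall d, {mpoly F[nv d]}) : Prop :=
  exists (m : nat -> nat) (g : forall d, {mpoly F[nv d + m d]}),
    [/\ poly_bounded m,
        (exists Cg : forall d, seq (gate F (nv d + m d)),
            poly_bounded (fun d => circuit_size (Cg d)) /\
            forall d, circuit_poly (Cg d) = g d),
        poly_bounded (fun d => mdegree (g d))
      & forall d, P d =
          \sum_(b : {ffun 'I_(m d) -> bool}) comp_mpoly (@bool_subst F (nv d) (m d) b) (g d)].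

(* Depth-3 (Sigma Pi Sigma) circuits over F in n variables.
   An affine form is (c0, c) : c0 + sum_i c_i x_i.
   A circuit is the list of its product gates, each a list of affine forms. *)
Definition affine_form (F : fieldType) (n : nat) : Type := (F * {ffun 'I_n -> F})%type.

Definition SPS (F : fieldType) (n : nat) : Type := seq (seq (affine_form F n)).

Definition affine_eval (F : fieldType) (n : nat) (L : affine_form F n)
    (x : 'I_n -> F) : F :=
  L.1 + \sum_(i < n) L.2 i * x i.

Definition SPS_eval (F : fieldType) (n : nat) (C : SPS F n) (x : 'I_n -> F) : F :=
  \sum_(T <- C) \prod_(L <- T) affine_eval L x.

Definition SPS_formal_degree (F : fieldType) (n : nat) (C : SPS F n) : nat :=
  \max_(T <- C) size T.

(* size = number of gates below the output: the s product gates plus the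
   sum_i d_i affine-form gates; in particular it is >= the top fan-in s. *)
Definition SPS_size (F : fieldType) (n : nat) (C : SPS F n) : nat :=
  (size C + \sum_(T <- C) size T)%N.

Definition func_equiv (F : fieldType) (n : nat) (C : SPS F n) (P : {mpoly F[n]}) : Prop :=
  forall x : 'I_n -> bool,
    SPS_eval C (fun i => (x i)%:R) = P.@[fun i => (x i)%:R].

(* Main.v *)
Require Import Defs.
From HB Require Import structures.
From mathcomp Require Import all_boot all_order all_algebra.
From mathcomp Require Import mpoly.
From mathcomp Require Import zify.
Set Implicit Arguments. Unset Strict Implicit. Unset Printing Implicit Defensive.
Import Order.TTheory GRing.Theory.

Section Part0.
Local Open Scope ring_scope.

Lemma rank_prod_affine (F : fieldType) (r c : nat) (W : seq (('I_r -> F) * ('I_c -> F))) :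
  (\rank (\matrix_(i < r, j < c) (\prod_(w <- W) (w.1 i + w.2 j) : F)%R) <= 2 ^ size W)%N.
Proof.
elim: W => [|w W IH].
  have -> : (\matrix_(i < r, j < c) (\prod_(w <- [::]) (w.1 i + w.2 j) : F)%R) =
     (const_mx 1 : 'M[F]_(r, 1)) *m (const_mx 1 : 'M[F]_(1, c)).
    apply/matrixP => i j; rewrite !mxE big_nil big_ord1 !mxE mulr1 //.
  exact: mulmx_max_rank.
set A := (\matrix_(i < r, j < c) (\prod_(w <- W) (w.1 i + w.2 j) : F)%R) in IH.
have -> : (\matrix_(i < r, j < c) (\prod_(w0 <- w :: W) (w0.1 i + w0.2 j) : F)%R) =
   diag_mx (\row_i w.1 i) *m A + A *m diag_mx (\row_j w.2 j).
  apply/matrixP => i j; rewrite mxE big_cons mulrDl.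
  by rewrite mxE mul_diag_mx mul_mx_diag !mxE [_ * w.2 j]mulrC.
apply: leq_trans (mxrank_add _ _) _.
rewrite /= expnS mul2n -addnn leq_add //.
  exact: leq_trans (mxrankM_maxr _ _) IH.
exact: leq_trans (mxrankM_maxl _ _) IH.
Qed.

End Part0.

Section Part1.
Local Open Scope ring_scope.

Section Gen.
Variables k m : nat.
Definition nvar := (k * m + k * m).+1.
Definition xi (i : 'I_k) (j : 'I_m) : 'I_nvar :=
  widen_ord (leqnSn _) (lshift (k * m) (mxvec_index i j)).
Definition yi (i : 'I_k) (j : 'I_m) : 'I_nvar :=
  widen_ord (leqnSn _) (rshift (k * m) (mxvec_index i j)).
Definition zi : 'I_nvar := ord_max.

Lemma xiE i j : nat_of_ord (xi i j) = mxvec_index i j. Proof. by []. Qed.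
Lemma yiE i j : nat_of_ord (yi i j) = (k * m + mxvec_index i j)%N. Proof. by []. Qed.
Lemma ziE : nat_of_ord zi = (k * m + k * m)%N. Proof. by []. Qed.

Lemma mxvec_index_inj (i i' : 'I_k) (j j' : 'I_m) : (mxvec_index i j : nat) = mxvec_index i' j' ->
  i = i' /\ j = j'.
Proof.
move=> /val_inj; rewrite /mxvec_index => /cast_ord_inj /enum_rank_inj [-> ->]; by [].
Qed.

Lemma xi_inj i j i' j' : (xi i j == xi i' j') = (i == i') && (j == j').
Proof.
apply/eqP/andP => [/(congr1 (@nat_of_ord _))|[/eqP-> /eqP->] //].
by rewrite !xiE => /mxvec_index_inj [-> ->].
Qed.

Lemma yi_inj i j i' j' : (yi i j == yi i' j') = (i == i') && (j == j').
Proof.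
apply/eqP/andP => [/(congr1 (@nat_of_ord _))|[/eqP-> /eqP->] //].
by rewrite !yiE => /eqP; rewrite eqn_add2l => /eqP /mxvec_index_inj [-> ->].
Qed.

Lemma xi_yi i j i' j' : (xi i j == yi i' j') = false.
Proof.
apply/negbTE/eqP => /(congr1 (@nat_of_ord _)); rewrite xiE yiE => e.
by have := ltn_ord (mxvec_index i j); rewrite e ltnNge leq_addr.
Qed.

Lemma xi_zi i j : (xi i j == zi) = false.
Proof.
apply/negbTE/eqP => /(congr1 (@nat_of_ord _)); rewrite xiE ziE => e.
by have := ltn_ord (mxvec_index i j); rewrite e ltnNge leq_addr.
Qed.

Lemma yi_zi i j : (yi i j == zi) = false.
Proof.
apply/negbTE/eqP => /(congr1 (@nat_of_ord _)); rewrite yiE ziE => /eqP; rewrite eqn_add2l => /eqP e.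
by have := ltn_ord (mxvec_index i j); rewrite e ltnn.
Qed.

Definition Pgen (R : comNzRingType) (par : nat) (X : 'I_nvar -> R) : R :=
  X zi ^+ par * \prod_(i < k) \sum_(j < m) X (xi i j) * X (yi i j).

Lemma Pgen_morph (R S : comNzRingType) (f : {rmorphism R -> S}) par X :
  f (Pgen par X) = Pgen par (fun v => f (X v)).
Proof.
by rewrite /Pgen rmorphM rmorphXn rmorph_prod; congr (_ * _); apply: eq_bigr => i _;
  rewrite rmorph_sum; apply: eq_bigr => j _; rewrite rmorphM.
Qed.

Definition pt (p q : {ffun 'I_k -> 'I_m}) (v : 'I_nvar) : bool :=
  [|| v == zi, [exists i, v == xi i (p i)] | [exists i, v == yi i (q i)]].

Lemma ex_xy (f : {ffun 'I_k -> 'I_m}) a b : [exists i0, xi a b == yi i0 (f i0)] = false.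
Proof. by apply/negbTE/existsP => -[i0]; rewrite xi_yi. Qed.
Lemma ex_yx (f : {ffun 'I_k -> 'I_m}) a b : [exists i0, yi a b == xi i0 (f i0)] = false.
Proof. by apply/negbTE/existsP => -[i0]; rewrite eq_sym xi_yi. Qed.

Lemma Pgen_pt (F : fieldType) par p q :
  Pgen par (fun v => ((pt p q v)%:R : F)) = (p == q)%:R.
Proof.
rewrite /Pgen /pt eqxx /= expr1n mul1r.
have -> : \prod_(i < k) \sum_(j < m)
   (([|| xi i j == zi, [exists i0, xi i j == xi i0 (p i0)] | [exists i0, xi i j == yi i0 (q i0)]])%:R : F) *
   ([|| yi i j == zi, [exists i0, yi i j == xi i0 (p i0)] | [exists i0, yi i j == yi i0 (q i0)]])%:R
  = \prod_(i < k) ((p i == q i)%:R : F).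
  apply: eq_bigr => i _.
  rewrite (bigD1 (p i)) //= big1 ?addr0; last first.
    move=> j ne; rewrite xi_zi yi_zi /=.
    have -> : [exists i0, xi i j == xi i0 (p i0)] = false.
      apply/negbTE/existsP => -[i0]; rewrite xi_inj => /andP[/eqP e /eqP e2].
      by move: ne; rewrite e e2 eqxx.
    by rewrite ex_xy /= mul0r.
  rewrite xi_zi yi_zi /=.
  have -> : [exists i0, xi i (p i) == xi i0 (p i0)] = true by apply/existsP; exists i; rewrite eqxx.
  rewrite ex_yx ex_xy.
  rewrite mul1r /=; 
  have -> : [exists i0, yi i (p i) == yi i0 (q i0)] = (p i == q i) => //.
  case: existsP => [[i0]|nex].
    by rewrite yi_inj => /andP[/eqP e /eqP e2]; rewrite e2 e eqxx.
  by apply/esym/negbTE/eqP => e; apply: nex; exists i; rewrite e.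
case: (p =P q) => [->|ne].
  by rewrite big1 // => i _; rewrite eqxx.
have [i ni] : exists i, p i != q i.
  case: (pickP (fun i => p i != q i)) => [i h|h]; first by exists i.
  by case: ne; apply/ffunP => i; have := h i; move=> /negbFE /eqP.
by rewrite (bigD1 i) //= (negbTE ni) mul0r.
Qed.

End Gen.

End Part1.

Section Part2.
Local Open Scope ring_scope.

Lemma rank_sum_seq (F : fieldType) (X : Type) (r c : nat) (A : seq X) (f : X -> 'M[F]_(r, c)) :
  (\rank (\sum_(x <- A) f x)%R <= \sum_(x <- A) \rank (f x))%N.
Proof.
elim: A => [|x A IH]; first by rewrite !big_nil mxrank0.
rewrite !big_cons; apply: leq_trans (mxrank_add _ _) _; exact: leq_add.
Qed.

Section Low.
Variables (F : fieldType) (k m : nat).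
Local Notation T := {ffun 'I_k -> 'I_m}.

Definition zb (v : 'I_(nvar k m)) : F := (v == zi k m)%:R.
Definition rb (p : T) (v : 'I_(nvar k m)) : F := [exists i, v == xi i (p i)]%:R.
Definition cb (q : T) (v : 'I_(nvar k m)) : F := [exists i, v == yi i (q i)]%:R.

Lemma pt_split p q v : ((pt p q v)%:R : F) = zb v + rb p v + cb q v.
Proof.
rewrite /pt /zb /rb /cb.
case: (v =P zi k m) => [->|nz].
  have -> : [exists i, zi k m == xi i (p i)] = false.
    by apply/negbTE/existsP => -[i]; rewrite eq_sym xi_zi.
  have -> : [exists i, zi k m == yi i (q i)] = false.
    by apply/negbTE/existsP => -[i]; rewrite eq_sym yi_zi.
  by rewrite /= !addr0.
rewrite /= add0r.
case: existsP => [[i /eqP ->]|_].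
  by rewrite ex_xy addr0.
by rewrite add0r.
Qed.

Definition fw (L : affine_form F (nvar k m)) :
    ('I_#|{: T}| -> F) * ('I_#|{: T}| -> F) :=
  (fun r => L.1 + \sum_(v < nvar k m) L.2 v * (zb v + rb (enum_val r) v),
   fun c => \sum_(v < nvar k m) L.2 v * cb (enum_val c) v).

Lemma lower_bound par (C : SPS F (nvar k m)) d :
  (forall G, G \in C -> (size G <= d)%N) ->
  (forall x : 'I_(nvar k m) -> bool,
     SPS_eval C (fun i => (x i)%:R) = Pgen par (fun i => ((x i)%:R : F))) ->
  (m ^ k <= size C * 2 ^ d)%N.
Proof.
move=> hsz heq.
pose M := \matrix_(r < #|{: T}|, c < #|{: T}|)
   SPS_eval C (fun v => ((pt (enum_val r) (enum_val c) v)%:R : F)).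
have M1 : M = 1%:M.
  apply/matrixP => r c; rewrite !mxE heq Pgen_pt.
  by congr (_ %:R); rewrite (inj_eq enum_val_inj).
have rM : \rank M = (m ^ k)%N by rewrite M1 mxrank1 card_ffun !card_ord.
have MS : M = (\sum_(G <- C) \matrix_(r, c) (\prod_(w <- map fw G) (w.1 r + w.2 c) : F))%R.
  apply/matrixP => r c; rewrite !mxE summxE /SPS_eval; apply: eq_bigr => G _.
  rewrite mxE big_map; apply: eq_bigr => L _.
  rewrite /affine_eval /fw /= -addrA -big_split /=; congr (_ + _); apply: eq_bigr => v _.
  by rewrite pt_split mulrDr.
rewrite -rM MS; apply: leq_trans (rank_sum_seq _ _) _.
have -> : (size C * 2 ^ d = \sum_(G <- C) 2 ^ d)%N by rewrite big_const_seq count_predT iter_addn_0 mulnC.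
rewrite big_seq_cond [X in (_ <= X)%N]big_seq_cond; apply: leq_sum => G /andP[GC _].
apply: leq_trans (rank_prod_affine _) _; rewrite size_map leq_pexp2l //; exact: hsz.
Qed.

End Low.

End Part2.

Section Part3.
Local Open Scope ring_scope.

Lemma homog_prod_ord (R : comNzRingType) n d k (f : 'I_k -> {mpoly R[n]}) :
  (forall i, f i \is d.-homog) -> \prod_(i < k) f i \is (d * k)%N.-homog.
Proof.
elim: k f => [|k IH] f hf; first by rewrite big_ord0 muln0 dhomog1.
rewrite big_ord_recr /= mulnS addnC; apply: dhomogM; last exact: hf.
exact: IH.
Qed.

Lemma homog_sum_ord (R : comNzRingType) n d k (f : 'I_k -> {mpoly R[n]}) :
  (forall i, f i \is d.-homog) -> \sum_(i < k) f i \is d.-homog.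
Proof.
move=> hf; elim/big_ind: _ => //; first exact: dhomog0.
by move=> x y hx hy; apply: dhomogD.
Qed.

Lemma homogX (R : comNzRingType) n (i : 'I_n) : ('X_i : {mpoly R[n]}) \is 1%N.-homog.
Proof. by rewrite dhomogX; apply/eqP; apply: mdeg1. Qed.

Lemma Pgen_homog (R : comNzRingType) k m n par (e : 'I_(nvar k m) -> 'I_n) :
  Pgen par (fun v => ('X_(e v) : {mpoly R[n]})) \is (par + 2 * k)%N.-homog.
Proof.
rewrite /Pgen; apply: dhomogM.
  by have := dhomogMn par (homogX R (e (zi k m))); rewrite mul1n.
apply: homog_prod_ord => i; apply: homog_sum_ord => j.
exact: (dhomogM (homogX R (e (xi i j))) (homogX R (e (yi i j)))).  
Qed.

Lemma msize_homog (R : idomainType) n d (p : {mpoly R[n]}) :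
  p \is d.-homog -> p != 0 -> msize p = d.+1.
Proof.
move=> hp nz; have h := dhomog_msize hp.
rewrite (mpolySpred _ nz); congr S; exact: (dhomog_uniq nz h hp).
Qed.

Lemma msize_homog_le (R : idomainType) n d (p : {mpoly R[n]}) :
  p \is d.-homog -> (msize p <= d.+1)%N.
Proof.
move=> hp; case: (p =P 0) => [->|/eqP nz]; first by rewrite msize0.
by rewrite (msize_homog hp nz).
Qed.

Lemma Pgen_eq (R : comNzRingType) k m par (X Y : 'I_(nvar k m) -> R) :
  X =1 Y -> Pgen par X = Pgen par Y.
Proof.
move=> h; rewrite /Pgen h; congr (_ * _); apply: eq_bigr => i _; apply: eq_bigr => j _.
by rewrite !h.
Qed.

Lemma Pgen_eval (F : fieldType) k m par (x : 'I_(nvar k m) -> bool) :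
  (Pgen par (fun v => ('X_v : {mpoly F[nvar k m]}))).@[fun i => (x i)%:R] =
  Pgen par (fun i => ((x i)%:R : F)).
Proof.
rewrite (Pgen_morph (meval (fun i => ((x i)%:R : F)))); apply: Pgen_eq => v. exact: mevalXU. Qed.

Lemma Pgen_neq0 (F : fieldType) k m par : (0 < m)%N ->
  Pgen par (fun v => ('X_v : {mpoly F[nvar k m]})) != 0.
Proof.
move=> m0; apply/eqP => h.
pose p : {ffun 'I_k -> 'I_m} := [ffun _ => Ordinal m0].
have := Pgen_eval F par (pt p p); rewrite h meval0 Pgen_pt eqxx => /eqP.
by rewrite eq_sym oner_eq0.
Qed.

Lemma Pgen_comp (F : fieldType) k m par mm (b : 'I_mm -> bool) :
  comp_mpoly (@bool_subst F (nvar k m) mm b)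
    (Pgen par (fun v => ('X_(lshift mm v) : {mpoly F[nvar k m + mm]}))) =
  Pgen par (fun v => ('X_v : {mpoly F[nvar k m]})).
Proof.
rewrite (Pgen_morph (comp_mpoly (@bool_subst F (nvar k m) mm b))); apply: Pgen_eq => v.
rewrite [LHS]comp_mpolyXU -tnth_nth tnth_mktuple.
by rewrite -[lshift mm v]/(unsplit (inl v)) unsplitK.
Qed.

End Part3.

Section Part4.
Local Open Scope ring_scope.

Lemma size_index_enum_ord n : size (index_enum 'I_n) = n.
Proof. by rewrite /index_enum unlock -enumT size_enum_ord. Qed.

Section Circ.
Variables (F : fieldType) (n : nat).
Local Notation gt := (gate F n).

Definition shift_gate (s : nat) (g : gt) : gt :=
  match g with
  | GAdd j l => GAdd F n (j + s) (l + s)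
  | GMul j l => GMul F n (j + s) (l + s)
  | _ => g
  end.

Local Notation stepf := (fun vals g => rcons vals (@gate_val F n vals g)).

Lemma size_foldl (V : seq {mpoly F[n]}) (C : seq gt) :
  size (foldl stepf V C) = (size V + size C)%N.
Proof.
elim: C V => [|g C IH] V /=; first by rewrite addn0.
by rewrite IH size_rcons addSnnS.
Qed.

Lemma size_vals (C : seq gt) : size (circuit_vals C) = size C.
Proof. by rewrite /circuit_vals size_foldl. Qed.

Lemma gate_val_shift (V1 W : seq {mpoly F[n]}) g :
  gate_val (V1 ++ W) (shift_gate (size V1) g) = gate_val W g.
Proof.
have h : forall j, nth 0 (V1 ++ W) (j + size V1) = nth 0 W j.
  by move=> j; rewrite nth_cat ltnNge leq_addl /= addnK.
by case: g => //= j l; rewrite !h.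
Qed.

Lemma foldl_shift (V1 W : seq {mpoly F[n]}) (C : seq gt) :
  foldl stepf (V1 ++ W) (map (shift_gate (size V1)) C) = V1 ++ foldl stepf W C.
Proof.
elim: C W => [|g C IH] W //=.
by rewrite gate_val_shift rcons_cat IH.
Qed.

Definition ccomb (mk : nat -> nat -> gt) (C1 C2 : seq gt) : seq gt :=
  C1 ++ map (shift_gate (size C1)) C2 ++ [:: mk (size C1).-1 (size C1 + size C2).-1].

Lemma ccomb_vals mk (C1 C2 : seq gt) :
  circuit_vals (ccomb mk C1 C2) =
  rcons (circuit_vals C1 ++ circuit_vals C2)
        (gate_val (circuit_vals C1 ++ circuit_vals C2) (mk (size C1).-1 (size C1 + size C2).-1)).
Proof.
have E : foldl stepf [::] (C1 ++ [seq shift_gate (size C1) i | i <- C2]) =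
    circuit_vals C1 ++ circuit_vals C2.
  have := foldl_shift (circuit_vals C1) [::] C2; rewrite cats0 size_vals => <-.
  by rewrite foldl_cat.
by rewrite /ccomb /circuit_vals catA foldl_cat /= -/(circuit_vals C1) E.
Qed.

Lemma nth_lasts (V1 V2 : seq {mpoly F[n]}) :
  V1 != [::] -> V2 != [::] ->
  nth 0 (V1 ++ V2) (size V1).-1 = last 0 V1 /\
  nth 0 (V1 ++ V2) (size V1 + size V2).-1 = last 0 V2.
Proof.
case: V1 => // a V1 _; case: V2 => // b V2 _; split.
  by rewrite nth_cat /= ltnSn; exact: (nth_last 0 (a :: V1)).
rewrite nth_cat /= ltnS addnS ltnNge leq_addr /= subSS addKn; exact: (nth_last 0 (b :: V2)).
Qed.

Definition cmul C1 C2 := ccomb (GMul F n) C1 C2.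
Definition cadd C1 C2 := ccomb (GAdd F n) C1 C2.

Lemma ccomb_poly mk (C1 C2 : seq gt) : (0 < size C1)%N -> (0 < size C2)%N ->
  circuit_poly (ccomb mk C1 C2) =
  gate_val (circuit_vals C1 ++ circuit_vals C2) (mk (size C1).-1 (size C1 + size C2).-1).
Proof. by move=> h1 h2; rewrite /circuit_poly ccomb_vals last_rcons. Qed.

Lemma cmul_poly (C1 C2 : seq gt) : (0 < size C1)%N -> (0 < size C2)%N ->
  circuit_poly (cmul C1 C2) = circuit_poly C1 * circuit_poly C2.
Proof.
move=> h1 h2; rewrite /cmul ccomb_poly //= -(size_vals C1) -(size_vals C2).
have [] := @nth_lasts (circuit_vals C1) (circuit_vals C2).
- by rewrite -size_eq0 size_vals -lt0n.
- by rewrite -size_eq0 size_vals -lt0n.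
by move=> -> ->.
Qed.

Lemma cadd_poly (C1 C2 : seq gt) : (0 < size C1)%N -> (0 < size C2)%N ->
  circuit_poly (cadd C1 C2) = circuit_poly C1 + circuit_poly C2.
Proof.
move=> h1 h2; rewrite /cadd ccomb_poly //= -(size_vals C1) -(size_vals C2).
have [] := @nth_lasts (circuit_vals C1) (circuit_vals C2).
- by rewrite -size_eq0 size_vals -lt0n.
- by rewrite -size_eq0 size_vals -lt0n.
by move=> -> ->.
Qed.

Lemma size_ccomb mk (C1 C2 : seq gt) : size (ccomb mk C1 C2) = (size C1 + size C2).+1.
Proof. by rewrite /ccomb !size_cat size_map /= addn1 addnS. Qed.

Definition cvar i : seq gt := [:: GVar F i].
Definition cconst c : seq gt := [:: GConst n c].

Lemma cvar_poly i : circuit_poly (cvar i) = 'X_i. Proof. by []. Qed.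
Lemma cconst_poly c : circuit_poly (cconst c) = c%:MP. Proof. by []. Qed.

Fixpoint csum (s : seq (seq gt)) : seq gt :=
  if s is C :: s' then cadd C (csum s') else cconst 0.
Fixpoint cprod (s : seq (seq gt)) : seq gt :=
  if s is C :: s' then cmul C (cprod s') else cconst 1.

Lemma csum_size s : size (csum s) = (\sum_(C <- s) (size C).+1).+1%N.
Proof. by elim: s => [|C s IH] /=; rewrite ?big_nil ?big_cons // size_ccomb IH addnS. Qed.
Lemma cprod_size s : size (cprod s) = (\sum_(C <- s) (size C).+1).+1%N.
Proof. by elim: s => [|C s IH] /=; rewrite ?big_nil ?big_cons // size_ccomb IH addnS. Qed.

Lemma csum_poly s : all (fun C => 0 < size C)%N s ->
  circuit_poly (csum s) = \sum_(C <- s) circuit_poly C.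
Proof.
elim: s => [|C s IH] /=; first by rewrite big_nil cconst_poly.
case/andP => h1 h2; by rewrite big_cons cadd_poly ?IH // csum_size.
Qed.
Lemma cprod_poly s : all (fun C => 0 < size C)%N s ->
  circuit_poly (cprod s) = \prod_(C <- s) circuit_poly C.
Proof.
elim: s => [|C s IH] /=; first by rewrite big_nil cconst_poly.
case/andP => h1 h2; by rewrite big_cons cmul_poly ?IH // cprod_size.
Qed.

End Circ.

End Part4.

Section Part5.
Local Open Scope ring_scope.

Lemma sum_const_seq (I : Type) (s : seq I) (c : nat) : (\sum_(i <- s) c)%N = (size s * c)%N.
Proof. by rewrite big_const_seq count_predT iter_addn_0 mulnC. Qed.

Section PC.
Variables (F : fieldType) (k m n : nat) (e : 'I_(nvar k m) -> 'I_n).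

Definition cterm i j : seq (gate F n) := cmul (cvar F (e (xi i j))) (cvar F (e (yi i j))).
Definition cblock i := csum [seq cterm i j | j <- index_enum 'I_m].
Definition cbody := cprod [seq cblock i | i <- index_enum 'I_k].
Definition cpow par := cprod (nseq par (cvar F (e (zi k m)))).
Definition cP par := cmul (cpow par) cbody.

Lemma cterm_size i j : size (cterm i j) = 3%N.
Proof. by rewrite /cterm /cmul size_ccomb. Qed.

Lemma cblock_size i : size (cblock i) = (m * 4).+1.
Proof.
rewrite /cblock csum_size big_map (eq_bigr (fun _ => 4%N)); last by move=> j _; rewrite cterm_size.
by rewrite sum_const_seq size_index_enum_ord.
Qed.

Lemma cbody_size : size cbody = (k * (m * 4).+2).+1.
Proof.
rewrite /cbody cprod_size big_map (eq_bigr (fun _ => (m * 4).+2)); last by move=> j _; rewrite cblock_size.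
by rewrite sum_const_seq size_index_enum_ord.
Qed.

Lemma cpow_size par : size (cpow par) = (par * 2).+1.
Proof.
rewrite /cpow cprod_size; congr S; elim: par => [|p IH]; first by rewrite big_nil.
by rewrite /= big_cons IH mulSn.
Qed.

Lemma cP_size par : size (cP par) = ((par * 2).+1 + (k * (m * 4).+2).+1).+1.
Proof. by rewrite /cP /cmul size_ccomb cpow_size cbody_size. Qed.

Lemma cP_poly par : circuit_poly (cP par) = Pgen par (fun v => ('X_(e v) : {mpoly F[n]})).
Proof.
rewrite /cP cmul_poly ?cpow_size ?cbody_size // /Pgen; congr (_ * _).
  rewrite /cpow cprod_poly; last by rewrite all_nseq orbT.
  elim: par => [|p IH]; first by rewrite big_nil expr0.
  by rewrite /= big_cons IH exprS.
rewrite /cbody cprod_poly; last by rewrite all_map; apply/allP => i _ /=; rewrite cblock_size.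
rewrite big_map; apply: eq_bigr => i _.
rewrite /cblock csum_poly; last by rewrite all_map; apply/allP => j _.
rewrite big_map; apply: eq_bigr => j _.
by rewrite /cterm cmul_poly.
Qed.

End PC.

End Part5.

Definition Kd (d : nat) : nat := d./2.
Definition Md (d : nat) : nat := 16 * d.+1.
Definition nvd (d : nat) : nat := nvar (Kd d) (Md d).

Lemma d_eq d : d = (odd d + 2 * Kd d)%N.
Proof. by rewrite /Kd mul2n -[in LHS](odd_double_half d) addnC; rewrite addnC. Qed.

Lemma Kd_le d : (2 * Kd d <= d)%N.
Proof. have := d_eq d; lia. Qed.

Lemma pb_aux (c d x : nat) : (2 <= c)%N -> (x <= c * d ^ 2 + c)%N -> (x <= c * d ^ c + c)%N.
Proof.
move=> hc hx; case: d hx => [|d] hx.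
  by move: hx; rewrite !exp0n //; lia.
apply: leq_trans hx _; rewrite leq_add2r leq_mul2l leq_pexp2l ?orbT //.
Qed.

Theorem theorem1p6 (F : fieldType) :
  exists (nv : nat -> nat) (P : forall d : nat, {mpoly F[nv d]}),
    [/\ poly_bounded nv,
        (forall d : nat, (d <= nv d)%N),
        VNP_family P,
        (forall d : nat, mdegree (P d) = d)
      & exists (a b d0 : nat), [/\ (0 < a)%N, (0 < b)%N &
          forall d : nat, (d0 <= d)%N ->
          forall C : SPS F (nv d),
            SPS_formal_degree C = d ->
            func_equiv C (P d) ->
            (nv d ^ (a * d) <= SPS_size C ^ b)%N]].
Proof.
exists nvd, (fun d => Pgen (odd d) (fun v => ('X_v : {mpoly F[nvd d]}))).
split.
- exists 64%N => d; apply: pb_aux => //.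
  rewrite /nvd /nvar /Md; have := Kd_le d; nia.
- move=> d; rewrite /nvd /nvar /Md; have := d_eq d; nia.
- exists (fun _ => 0%N), (fun d => Pgen (odd d) (fun v => ('X_(lshift 0 v) : {mpoly F[nvd d + 0]}))).
  split.
  + by exists 0%N => d.
  + exists (fun d => @cP F (Kd d) (Md d) _ (@lshift (nvd d) 0) (odd d)); split.
      exists 200%N => d; apply: pb_aux => //; rewrite /circuit_size cP_size /Md.
      have := Kd_le d; have : (odd d <= 1)%N by case: odd. nia.
    by move=> d; rewrite cP_poly.
  + exists 1%N => d; rewrite /mdegree.
    have := msize_homog_le (Pgen_homog F (odd d) (@lshift (nvd d) 0)).
    rewrite -d_eq => h; rewrite expn1 mul1n addn1; exact: leq_trans (leq_pred _) h.
  + move=> d; rewrite (eq_bigr (fun _ => Pgen (odd d) (fun v => ('X_v : {mpoly F[nvd d]})))); last first.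
      by move=> b _; rewrite Pgen_comp.
    by rewrite sumr_const card_ffun card_ord card_bool expn0.
- move=> d; rewrite /mdegree (msize_homog (Pgen_homog F (odd d) id)) -?d_eq //.
  by apply: Pgen_neq0; rewrite /Md.
- exists 1%N, 16%N, 4%N; split => // d hd C hdeg heq.
  have hsz : forall G, G \in C -> (size G <= d)%N.
    move=> G GC; apply: leq_trans _ (eq_leq hdeg); rewrite /SPS_formal_degree. exact: (@leq_bigmax_seq _ C xpredT (fun T => size T) G GC isT).
  have lb := lower_bound hsz (fun x => etrans (heq x) (Pgen_eval F (odd d) x)).
  rewrite mul1n.
  set M := Md d in lb *; set K := Kd d in lb *.
  have hde := d_eq d; have hd0 : (0 < d)%N by lia.
  have hM : M = (16 * d.+1)%N by [].
  have hK : (2 <= K)%N by rewrite /K; lia.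
  have hM16 : (16 <= M)%N by lia.
  have hnv : (nvd d <= M * M)%N by rewrite /nvd /nvar -/K -/M; nia.
  have hS : (size C <= SPS_size C)%N by rewrite /SPS_size leq_addr.
  have e1 : (nvd d ^ d <= M ^ (2 * d))%N by rewrite expnM leq_exp2r // -mulnn.
  have e2 : (2 ^ (16 * d) <= M ^ (4 * d))%N.
    have -> : (16 * d = 4 * (4 * d))%N by lia.
    rewrite expnM leq_exp2r //; lia.
  have e3 : (M ^ (2 * d) * M ^ (4 * d) <= M ^ (16 * K))%N.
    by rewrite -expnD leq_pexp2l //; lia.
  have e4 : (M ^ (16 * K) <= SPS_size C ^ 16 * 2 ^ (16 * d))%N.
    rewrite mulnC expnM -(mulnC d) expnM -expnMn leq_exp2r //.
    apply: leq_trans lb _; rewrite leq_mul2r hS orbT //.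
  rewrite -(leq_pmul2r (expn_gt0 2 (16 * d))).
  apply: leq_trans (leq_mul e1 e2) _; exact: leq_trans e3 e4.
Qed.
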